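(* Let $F$ be the unique series in $\mathbb{Q}[x,\bar x,y,\bar y][[t]]$ satisfying $(1-St)F=\bar x\bar y-\bar x t[x^0]F-\bar y t[y^0]F$, let $F_4=[x^\ge][y^\ge]F$, and put $O=xy-\bar xy-x\bar y+\bar x\bar y$. Then $$F_4(x,y,t)=\bar x\bar y t^2\,[y^>]\Bigl(\Bigl([\bar x]\frac{(y-\bar y)\,[\bar y]\frac{O}{1-St}}{1-St}\Bigr)\Bigl([x^>]\frac{x-\bar x}{1-St}\Bigr)\Bigr)+\bar x\bar y t^2\,[x^>]\Bigl(\Bigl([\bar y]\frac{(x-\bar x)\,[\bar x]\frac{O}{1-St}}{1-St}\Bigr)\Bigl([y^>]\frac{y-\bar y}{1-St}\Bigr)\Bigr).$$
   Context: Notation: $\bar x=x^{-1}$, $\bar y=y^{-1}$, $S=x+y+\bar x+\bar y$; series in $\mathbb{Q}[x,\bar x,y,\bar y][[t]]$, with $1/(1-St)$ expanded as a power series in $t$. For $G=\sum c_{i,j,n}x^iy^jt^n$: $[x^0]G=\sum_{j,n}c_{0,j,n}y^jt^n$; $[x^\ge]G$, $[x^>]G$ denote the sums of terms with $x$-exponent $\ge0$, $>0$ respectively, analogously for $y$; $[\bar x]G=\sum_{j,n}c_{-1,j,n}y^jt^n$ is the coefficient of $x^{-1}$ and $[\bar y]G=\sum_{i,n}c_{i,-1,n}x^it^n$ the coefficient of $y^{-1}$. *)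

(* Defs.v *)
From mathcomp Require Import all_boot all_order all_algebra.
Set Implicit Arguments. Unset Strict Implicit. Unset Printing Implicit Defensive.
Import Order.TTheory GRing.Theory Num.Theory.
Local Open Scope ring_scope.

(* Laurent polynomials in x, y over Q, represented by a (non-canonical)     *)
(* list of terms ((i, j), c) standing for c x^i y^j.  Two Laurent           *)
(* polynomials are equal iff all their coefficients [lcoef] agree.          *)
Definition lpoly := seq ((int * int) * rat).

Definition lcoef (p : lpoly) (i j : int) : rat :=
  \sum_(m <- p | (m.1.1 == i) && (m.1.2 == j)) m.2.

Definition lmon (i j : int) (c : rat) : lpoly := [:: ((i, j), c)].
Definition lzero : lpoly := [::].
Definition lone : lpoly := lmon 0 0 1.
Definition ladd (p q : lpoly) : lpoly := p ++ q.
Definition lscale (c : rat) (p : lpoly) : lpoly := [seq (m.1, c * m.2) | m <- p].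
Definition lmul (p q : lpoly) : lpoly :=
  [seq ((a.1.1 + b.1.1, a.1.2 + b.1.2), a.2 * b.2) | a <- p, b <- q].
Definition lpow (p : lpoly) (n : nat) : lpoly := iter n (lmul p) lone.

Definition lx : lpoly := lmon 1 0 1.
Definition lxb : lpoly := lmon (-1) 0 1.
Definition ly : lpoly := lmon 0 1 1.
Definition lyb : lpoly := lmon 0 (-1) 1.

Definition S_ : lpoly := ladd lx (ladd ly (ladd lxb lyb)).
Definition O_ : lpoly :=
  ladd (lmon 1 1 1) (ladd (lmon (-1) 1 (-1)) (ladd (lmon 1 (-1) (-1)) (lmon (-1) (-1) 1))).

Definition series := nat -> lpoly.

Definition scoef (G : series) (n : nat) (i j : int) : rat := lcoef (G n) i j.

Definition seqv (A B : series) : Prop :=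
  forall n i j, scoef A n i j = scoef B n i j.

Definition sconst (p : lpoly) : series := fun n => if n is 0%N then p else lzero.
Definition sadd (A B : series) : series := fun n => ladd (A n) (B n).
Definition sopp (A : series) : series := fun n => lscale (-1) (A n).
Definition ssub (A B : series) : series := sadd A (sopp B).
Definition spmul (p : lpoly) (A : series) : series := fun n => lmul p (A n).
Definition smul_t (A : series) : series :=
  fun n => if n is n'.+1 then A n' else lzero.
Definition smul (A B : series) : series :=
  fun n => flatten [seq lmul (A k) (B (n - k)%N) | k <- iota 0 n.+1].

Definition geomS : series := fun n => lpow S_ n.
Definition sdivS (A : series) : series := smul geomS A.

Definition sx0 (G : series) : series := fun n => [seq m <- G n | m.1.1 == 0].
Definition sy0 (G : series) : series := fun n => [seq m <- G n | m.1.2 == 0].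
Definition sxge (G : series) : series := fun n => [seq m <- G n | 0 <= m.1.1].
Definition sxgt (G : series) : series := fun n => [seq m <- G n | 0 < m.1.1].
Definition syge (G : series) : series := fun n => [seq m <- G n | 0 <= m.1.2].
Definition sygt (G : series) : series := fun n => [seq m <- G n | 0 < m.1.2].
Definition sxbar (G : series) : series :=
  fun n => [seq ((0, m.1.2), m.2) | m <- [seq m <- G n | m.1.1 == -1]].
Definition sybar (G : series) : series :=
  fun n => [seq ((m.1.1, 0), m.2) | m <- [seq m <- G n | m.1.2 == -1]].

Definition F_equation (F : series) : Prop :=
  seqv (ssub F (smul_t (spmul S_ F)))
       (ssub (ssub (sconst (lmul lxb lyb)) (smul_t (spmul lxb (sx0 F))))
             (smul_t (spmul lyb (sy0 F)))).

Definition F4 (F : series) : series := sxge (syge F).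

Definition RHS4 : series :=
  sadd
    (spmul (lmul lxb lyb) (smul_t (smul_t
       (sygt (smul
          (sxbar (sdivS (spmul (ladd ly (lscale (-1) lyb))
                                (sybar (sdivS (sconst O_))))))
          (sxgt (sdivS (sconst (ladd lx (lscale (-1) lxb))))))))))
    (spmul (lmul lxb lyb) (smul_t (smul_t
       (sxgt (smul
          (sybar (sdivS (spmul (ladd lx (lscale (-1) lxb))
                                (sxbar (sdivS (sconst O_))))))
          (sygt (sdivS (sconst (ladd ly (lscale (-1) lyb)))))))))).

(* Main.v *)
Require Import Defs.
From mathcomp Require Import all_boot all_order all_algebra.
From mathcomp Require Import lra zify.
Set Implicit Arguments. Unset Strict Implicit. Unset Printing Implicit Defensive.
Import Order.TTheory GRing.Theory Num.Theory.
Local Open Scope ring_scope.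

Definition fn := int -> int -> rat.

Lemma lcoefE (p : lpoly) i j :
  lcoef p i j = \sum_(m <- p) (if (m.1.1 == i) && (m.1.2 == j) then m.2 else 0).
Proof. by rewrite /lcoef big_mkcond. Qed.

Lemma lcoef_nil i j : lcoef [::] i j = 0.
Proof. by rewrite /lcoef big_nil. Qed.

Lemma lcoef_cons m p i j : lcoef (m :: p) i j =
  (if (m.1.1 == i) && (m.1.2 == j) then m.2 else 0) + lcoef p i j.
Proof. by rewrite !lcoefE big_cons. Qed.

Lemma lcoef_cat p q i j : lcoef (p ++ q) i j = lcoef p i j + lcoef q i j.
Proof. by rewrite /lcoef big_cat. Qed.

Lemma lcoef_flatten (L : seq lpoly) i j :
  lcoef (flatten L) i j = \sum_(l <- L) lcoef l i j.
Proof.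
elim: L => [|l L IH]; first by rewrite big_nil lcoef_nil.
by rewrite /= lcoef_cat IH big_cons.
Qed.

Lemma lcoef_scale c p i j : lcoef (lscale c p) i j = c * lcoef p i j.
Proof.
elim: p => [|m p IH]; first by rewrite /lscale /= !lcoef_nil mulr0.
rewrite /lscale /= !lcoef_cons -/(lscale c p) IH mulrDr.
by case: ifP => _; rewrite ?mulr0.
Qed.

Lemma lcoef_filter (Q : int -> int -> bool) p i j :
  lcoef [seq m <- p | Q m.1.1 m.1.2] i j = if Q i j then lcoef p i j else 0.
Proof.
elim: p => [|m p IH]; first by rewrite /= lcoef_nil; case: ifP.
rewrite /=; case: ifP => Hq; rewrite ?lcoef_cons IH;
  case: (boolP ((m.1.1 == i) && (m.1.2 == j))) => [/andP[/eqP E1 /eqP E2]|Hn].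
- by rewrite -E1 -E2 Hq.
- by case: ifP; rewrite ?add0r.
- by move: Hq; rewrite E1 E2 => ->.
- by rewrite add0r.
Qed.

Lemma lcoef_lmul2 p q i j : lcoef (lmul p q) i j =
  \sum_(a <- p) \sum_(b <- q)
    (if (a.1.1 + b.1.1 == i) && (a.1.2 + b.1.2 == j) then a.2 * b.2 else 0).
Proof. by rewrite lcoefE /lmul big_allpairs_dep. Qed.

Lemma lcoef_lmul p q i j : lcoef (lmul p q) i j =
  \sum_(a <- p) a.2 * lcoef q (i - a.1.1) (j - a.1.2).
Proof.
rewrite lcoef_lmul2; apply: eq_bigr => a _.
rewrite lcoefE big_distrr /=; apply: eq_bigr => b _.
have -> : (a.1.1 + b.1.1 == i) = (b.1.1 == i - a.1.1).
  by apply/eqP/eqP => H; lia.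
have -> : (a.1.2 + b.1.2 == j) = (b.1.2 == j - a.1.2).
  by apply/eqP/eqP => H; lia.
by case: ifP; rewrite ?mulr0.
Qed.

Lemma lcoef_lmulC p q i j : lcoef (lmul p q) i j = lcoef (lmul q p) i j.
Proof.
rewrite !lcoef_lmul2 exchange_big; apply: eq_bigr => b _; apply: eq_bigr => a _.
by rewrite (addrC b.1.1) (addrC b.1.2) mulrC.
Qed.

Lemma lcoef_lmulA p q r i j :
  lcoef (lmul (lmul p q) r) i j = lcoef (lmul p (lmul q r)) i j.
Proof.
rewrite lcoef_lmul2 lcoef_lmul {1}/lmul big_allpairs_dep.
apply: eq_bigr => a _; rewrite lcoef_lmul2 big_distrr; apply: eq_bigr => b _.
rewrite big_distrr; apply: eq_bigr => c _ /=.
have -> : (a.1.1 + b.1.1 + c.1.1 == i) = (b.1.1 + c.1.1 == i - a.1.1).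
  by apply/eqP/eqP => H; lia.
have -> : (a.1.2 + b.1.2 + c.1.2 == j) = (b.1.2 + c.1.2 == j - a.1.2).
  by apply/eqP/eqP => H; lia.
by case: ifP => _; rewrite ?mulr0 ?mulrA.
Qed.

Lemma lcoef_lmul_congr2 p q q' : lcoef q =2 lcoef q' ->
  lcoef (lmul p q) =2 lcoef (lmul p q').
Proof. move=> H i j; rewrite !lcoef_lmul; apply: eq_bigr => a _; by rewrite H. Qed.

Lemma lcoef_lmul_congr1 p p' q : lcoef p =2 lcoef p' ->
  lcoef (lmul p q) =2 lcoef (lmul p' q).
Proof. move=> H i j; rewrite lcoef_lmulC (lcoef_lmulC p'); exact: lcoef_lmul_congr2. Qed.

Definition P (f : fn) : fn := fun i j => f (i-1) j + f i (j-1) + f (i+1) j + f i (j+1).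
Definition Piter (n : nat) (f : fn) : fn := iter n P f.
Definition X (f : fn) : fn := fun i j => f (i-1) j - f (i+1) j.
Definition Y (f : fn) : fn := fun i j => f i (j-1) - f i (j+1).
Definition fadd (f g : fn) : fn := fun i j => f i j + g i j.
Definition fzero : fn := fun _ _ => 0.

Lemma P_congr f g : f =2 g -> P f =2 P g.
Proof. by move=> H i j; rewrite /P !H. Qed.

Lemma Piter_congr n f g : f =2 g -> Piter n f =2 Piter n g.
Proof. elim: n => [|n IH] H //=; by apply: P_congr; apply: IH. Qed.

Lemma PiterS n f : Piter n.+1 f = P (Piter n f).
Proof. by []. Qed.

Lemma P_add f g : P (fadd f g) =2 fadd (P f) (P g).
Proof. move=> i j; rewrite /P /fadd; lra. Qed.

Lemma P_zero : P fzero =2 fzero.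
Proof. move=> i j; rewrite /P /fzero; lra. Qed.

Lemma Piter_add n f g : Piter n (fadd f g) =2 fadd (Piter n f) (Piter n g).
Proof.
elim: n => [|n IH] //= i j.
by rewrite (P_congr IH) P_add.
Qed.

Lemma Piter_zero n : Piter n fzero =2 fzero.
Proof. elim: n => [|n IH] //= i j; by rewrite (P_congr IH) P_zero. Qed.

Lemma P_sum m (g : nat -> fn) i j :
  P (fun i j => \sum_(k < m) g k i j) i j = \sum_(k < m) P (g k) i j.
Proof. by rewrite /P !big_split. Qed.

Lemma lcoef_lmulS q i j : lcoef (lmul S_ q) i j = P (lcoef q) i j.
Proof.
rewrite lcoef_lmul /S_ /ladd /= !big_cons big_nil /P /=.
by rewrite !mul1r !subr0 !opprK ?addr0 !addrA.
Qed.

Lemma lcoef_lmulSn n q : lcoef (lmul (lpow S_ n) q) =2 Piter n (lcoef q).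
Proof.
elim: n => [|n IH] i j.
  rewrite /lpow /= lcoef_lmul /lone /lmon big_cons big_nil /=.
  by rewrite mul1r !subr0 ?addr0.
rewrite /lpow iterS -/(lpow S_ n) lcoef_lmulA lcoef_lmulS PiterS.
exact: P_congr.
Qed.

Lemma lcoef_lmulX q i j :
  lcoef (lmul (ladd lx (lscale (-1) lxb)) q) i j = X (lcoef q) i j.
Proof.
rewrite lcoef_lmul /ladd /= !big_cons big_nil /X /=.
by rewrite !subr0 !opprK ?addr0 ?mul1r ?mulr1 ?mulN1r.
Qed.

Lemma lcoef_lmulY q i j :
  lcoef (lmul (ladd ly (lscale (-1) lyb)) q) i j = Y (lcoef q) i j.
Proof.
rewrite lcoef_lmul /ladd /= !big_cons big_nil /Y /=.
by rewrite !subr0 !opprK ?addr0 ?mul1r ?mulr1 ?mulN1r.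
Qed.

Lemma lcoef_lmulxb q i j : lcoef (lmul lxb q) i j = lcoef q (i+1) j.
Proof. by rewrite lcoef_lmul /= big_cons big_nil mul1r opprK subr0 ?addr0. Qed.

Lemma lcoef_lmulyb q i j : lcoef (lmul lyb q) i j = lcoef q i (j+1).
Proof. by rewrite lcoef_lmul /= big_cons big_nil mul1r opprK subr0 ?addr0. Qed.

Lemma lcoef_lmulxbyb q i j : lcoef (lmul (lmul lxb lyb) q) i j = lcoef q (i+1) (j+1).
Proof. by rewrite lcoef_lmul /= big_cons big_nil mul1r ?addr0 ?add0r !opprK. Qed.

Lemma lcoef_smul A B n i j :
  lcoef (smul A B n) i j = \sum_(k < n.+1) lcoef (lmul (A k) (B (n - k)%N)) i j.
Proof.
rewrite /smul lcoef_flatten big_map.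
by rewrite -(big_mkord xpredT (fun k => lcoef (lmul (A k) (B (n - k)%N)) i j)) /index_iota subn0.
Qed.

Definition conv1 (a : nat -> fn) (n : nat) : fn :=
  fun i j => \sum_(k < n.+1) Piter k (a (n - k)%N) i j.
Definition conv2 (a : nat -> fn) (n : nat) : fn :=
  fun i j => \sum_(k < n.+1) Piter (n - k)%N (a k) i j.

Lemma lcoef_sdivS A n i j : lcoef (sdivS A n) i j = conv1 (fun k => lcoef (A k)) n i j.
Proof.
rewrite /sdivS lcoef_smul /conv1; apply: eq_bigr => k _.
by rewrite lcoef_lmulSn.
Qed.

Lemma conv1_rec a n i j : conv1 a n.+1 i j = P (conv1 a n) i j + a n.+1 i j.
Proof.
rewrite /conv1 big_ord_recl /= subn0 addrC (P_sum n.+1 (fun k => Piter k (a (n-k)%N))); congr (_ + _).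
Qed.

Lemma conv2_rec a n i j : conv2 a n.+1 i j = P (conv2 a n) i j + a n.+1 i j.
Proof.
rewrite /conv2 big_ord_recr /= subnn (P_sum n.+1 (fun k => Piter (n-k)%N (a k))); congr (_ + _).
by apply: eq_bigr => k _; rewrite subSn // -ltnS.
Qed.

Lemma conv1_0 a i j : conv1 a 0 i j = a 0%N i j.
Proof. by rewrite /conv1 big_ord_recl big_ord0 addr0. Qed.

Lemma conv2_0 a i j : conv2 a 0 i j = a 0%N i j.
Proof. by rewrite /conv2 big_ord_recl big_ord0 addr0. Qed.

Lemma lcoef_sdivS_const p n : lcoef (sdivS (sconst p) n) =2 Piter n (lcoef p).
Proof.
move=> i j; rewrite lcoef_sdivS /conv1 big_ord_recr /= subnn.
rewrite big1 ?add0r // => k _.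
have -> : (n - k = (n - k.+1).+1)%N by rewrite subnSK.
rewrite /= (Piter_congr _ (g := fzero)) ?Piter_zero // => x y.
by rewrite lcoef_nil.
Qed.

Lemma lcoef_sx0 G n i j : lcoef (sx0 G n) i j = if i == 0 then lcoef (G n) i j else 0.
Proof. exact: (lcoef_filter (fun a _ => a == 0)). Qed.
Lemma lcoef_sy0 G n i j : lcoef (sy0 G n) i j = if j == 0 then lcoef (G n) i j else 0.
Proof. exact: (lcoef_filter (fun _ b => b == 0)). Qed.
Lemma lcoef_sxge G n i j : lcoef (sxge G n) i j = if 0 <= i then lcoef (G n) i j else 0.
Proof. exact: (lcoef_filter (fun a _ => 0 <= a)). Qed.
Lemma lcoef_syge G n i j : lcoef (syge G n) i j = if 0 <= j then lcoef (G n) i j else 0.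
Proof. exact: (lcoef_filter (fun _ b => 0 <= b)). Qed.
Lemma lcoef_sxgt G n i j : lcoef (sxgt G n) i j = if 0 < i then lcoef (G n) i j else 0.
Proof. exact: (lcoef_filter (fun a _ => 0 < a)). Qed.
Lemma lcoef_sygt G n i j : lcoef (sygt G n) i j = if 0 < j then lcoef (G n) i j else 0.
Proof. exact: (lcoef_filter (fun _ b => 0 < b)). Qed.

Lemma lcoef_sxbar G n i j :
  lcoef (sxbar G n) i j = if i == 0 then lcoef (G n) (-1) j else 0.
Proof.
rewrite /sxbar; elim: (G n) => [|m p IH]; first by rewrite /= !lcoef_nil; case: ifP.
rewrite /=; case: ifP => Hm /=.
  rewrite !lcoef_cons IH /=; move/eqP: Hm => ->; rewrite ?eqxx /= (eq_sym 0 i).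
  by case: (i == 0) => /=; rewrite ?addr0.
rewrite lcoef_cons IH.
case: (boolP ((m.1.1 == -1) && (m.1.2 == j))) => [/andP[/eqP E1 _]|_].
  by rewrite E1 ?eqxx in Hm.
by rewrite add0r.
Qed.

Lemma lcoef_sybar G n i j :
  lcoef (sybar G n) i j = if j == 0 then lcoef (G n) i (-1) else 0.
Proof.
rewrite /sybar; elim: (G n) => [|m p IH]; first by rewrite /= !lcoef_nil; case: ifP.
rewrite /=; case: ifP => Hm /=.
  rewrite !lcoef_cons IH /=; move/eqP: Hm => ->; rewrite ?eqxx andbT (eq_sym 0 j).
  by case: (j == 0); rewrite ?andbT ?andbF /= ?addr0.
rewrite lcoef_cons IH.
case: (boolP ((m.1.1 == i) && (m.1.2 == -1))) => [/andP[_ /eqP E1]|_].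
  by rewrite E1 ?eqxx in Hm.
by rewrite add0r.
Qed.

Lemma lcoef_xbyb i j : lcoef (lmul lxb lyb) i j = if (i == -1) && (j == -1) then 1 else 0.
Proof.
rewrite /lmul /= lcoef_cons lcoef_nil addr0 ?addr0 ?add0r mulr1.
by rewrite (eq_sym _ i) (eq_sym _ j).
Qed.

Section FEq.
Variable F : series.
Hypothesis HF : F_equation F.
Let f n := lcoef (F n).

Lemma f_0 i j : f 0 i j = if (i == -1) && (j == -1) then 1 else 0.
Proof.
have := HF 0 i j; rewrite /scoef /ssub /sadd /sopp /ladd.
rewrite !lcoef_cat !lcoef_scale /smul_t /sconst !lcoef_nil lcoef_xbyb /f. lra.
Qed.

Lemma f_S n i j : f n.+1 i j = P (f n) i j
   - (if i + 1 == 0 then f n (i+1) j else 0) - (if j + 1 == 0 then f n i (j+1) else 0).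
Proof.
have := HF n.+1 i j; rewrite /scoef /ssub /sadd /sopp /ladd.
rewrite !lcoef_cat !lcoef_scale /smul_t /sconst /spmul !lcoef_nil lcoef_lmulS lcoef_lmulxb lcoef_lmulyb.
rewrite lcoef_sx0 lcoef_sy0 /f. set A := (if i + 1 == 0 then _ else _); set B := (if j + 1 == 0 then _ else _); set C := P _ i j; lra.
Qed.
End FEq.

Definition AX (f : fn) := forall i j, f (-i) j = - f i j.
Definition AY (f : fn) := forall i j, f i (-j) = - f i j.
Definition SX (f : fn) := forall i j, f (-i) j = f i j.
Definition SY (f : fn) := forall i j, f i (-j) = f i j.

Lemma AX_ext f g : f =2 g -> AX f -> AX g.
Proof. by move=> E H i j; rewrite -!E H. Qed.
Lemma AY_ext f g : f =2 g -> AY f -> AY g.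
Proof. by move=> E H i j; rewrite -!E H. Qed.

Lemma AX0 f j : AX f -> f 0 j = 0.
Proof. move=> H; have := H 0 j; rewrite oppr0 => E; lra. Qed.
Lemma AY0 f i : AY f -> f i 0 = 0.
Proof. move=> H; have := H i 0; rewrite oppr0 => E; lra. Qed.

Lemma AX_P f : AX f -> AX (P f).
Proof.
move=> H i j; rewrite /P.
have -> : -i - 1 = -(i+1) by lia.
have -> : -i + 1 = -(i-1) by lia.
rewrite !H; lra.
Qed.
Lemma AY_P f : AY f -> AY (P f).
Proof.
move=> H i j; rewrite /P.
have -> : -j - 1 = -(j+1) by lia.
have -> : -j + 1 = -(j-1) by lia.
rewrite !H; lra.
Qed.
Lemma AX_Piter n f : AX f -> AX (Piter n f).
Proof. by move=> H; elim: n => //= n IH; apply: AX_P. Qed.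
Lemma AY_Piter n f : AY f -> AY (Piter n f).
Proof. by move=> H; elim: n => //= n IH; apply: AY_P. Qed.
Lemma AX_fadd f g : AX f -> AX g -> AX (fadd f g).
Proof. move=> H1 H2 i j; rewrite /fadd H1 H2; lra. Qed.
Lemma AY_fadd f g : AY f -> AY g -> AY (fadd f g).
Proof. move=> H1 H2 i j; rewrite /fadd H1 H2; lra. Qed.
Lemma AX_fzero : AX fzero.
Proof. move=> i j; rewrite /fzero; lra. Qed.
Lemma AY_fzero : AY fzero.
Proof. move=> i j; rewrite /fzero; lra. Qed.

Lemma AX_X f : SX f -> AX (X f).
Proof.
move=> H i j; rewrite /X.
have -> : -i - 1 = -(i+1) by lia.
have -> : -i + 1 = -(i-1) by lia.
rewrite !H; lra.
Qed.
Lemma AY_X f : AY f -> AY (X f).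
Proof. move=> H i j; rewrite /X !H; lra. Qed.
Lemma AY_Y f : SY f -> AY (Y f).
Proof.
move=> H i j; rewrite /Y.
have -> : -j - 1 = -(j+1) by lia.
have -> : -j + 1 = -(j-1) by lia.
rewrite !H; lra.
Qed.
Lemma AX_Y f : AX f -> AX (Y f).
Proof. move=> H i j; rewrite /Y !H; lra. Qed.

Lemma AX_conv1 a n : (forall k, AX (a k)) -> AX (conv1 a n).
Proof.
move=> H; elim: n => [|n IH].
  by apply: (AX_ext (f := a 0%N)) => // i j; rewrite conv1_0.
apply: (AX_ext (f := fadd (P (conv1 a n)) (a n.+1))).
  by move=> i j; rewrite conv1_rec.
by apply: AX_fadd => //; apply: AX_P.
Qed.
Lemma AY_conv1 a n : (forall k, AY (a k)) -> AY (conv1 a n).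
Proof.
move=> H; elim: n => [|n IH].
  by apply: (AY_ext (f := a 0%N)) => // i j; rewrite conv1_0.
apply: (AY_ext (f := fadd (P (conv1 a n)) (a n.+1))).
  by move=> i j; rewrite conv1_rec.
by apply: AY_fadd => //; apply: AY_P.
Qed.
Lemma AX_conv2 a n : (forall k, AX (a k)) -> AX (conv2 a n).
Proof.
move=> H; elim: n => [|n IH].
  by apply: (AX_ext (f := a 0%N)) => // i j; rewrite conv2_0.
apply: (AX_ext (f := fadd (P (conv2 a n)) (a n.+1))).
  by move=> i j; rewrite conv2_rec.
by apply: AX_fadd => //; apply: AX_P.
Qed.
Lemma AY_conv2 a n : (forall k, AY (a k)) -> AY (conv2 a n).
Proof.
move=> H; elim: n => [|n IH].
  by apply: (AY_ext (f := a 0%N)) => // i j; rewrite conv2_0.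
apply: (AY_ext (f := fadd (P (conv2 a n)) (a n.+1))).
  by move=> i j; rewrite conv2_rec.
by apply: AY_fadd => //; apply: AY_P.
Qed.

Definition chiO : fn := lcoef O_.

Lemma chiOE i j : chiO i j =
  (if (i == 1) && (j == 1) then 1 else 0) - (if (i == -1) && (j == 1) then 1 else 0)
  - (if (i == 1) && (j == -1) then 1 else 0) + (if (i == -1) && (j == -1) then 1 else 0).
Proof.
rewrite /chiO /O_ /ladd /lmon /= !lcoef_cons lcoef_nil /=.
rewrite !(eq_sym _ i) !(eq_sym _ j).
case: (i == 1); case: (i == -1); case: (j == 1); case: (j == -1); rewrite /=; lra.
Qed.

Lemma eqN (a i : int) : (- i == a) = (i == - a).
Proof. by apply/eqP/eqP => H; lia. Qed.

Lemma AX_chiO : AX chiO.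
Proof.
move=> i j; rewrite !chiOE !eqN opprK.
case: (i == 1); case: (i == -1); case: (j == 1); case: (j == -1); rewrite /=; lra.
Qed.
Lemma AY_chiO : AY chiO.
Proof.
move=> i j; rewrite !chiOE !eqN opprK.
case: (i == 1); case: (i == -1); case: (j == 1); case: (j == -1); rewrite /=; lra.
Qed.

Definition cC (n : nat) : fn := Piter n chiO.
Definition rr (n : nat) : fn := fun i j => if j == 0 then cC n i (-1) else 0.
Definition ss (n : nat) : fn := fun i j => if i == 0 then cC n (-1) j else 0.
Definition Lam (n : nat) : fn :=
  if n is n'.+1 then conv1 (fun k => Y (rr k)) n' else fzero.
Definition LamD (n : nat) : fn :=
  if n is n'.+1 then conv1 (fun k => X (ss k)) n' else fzero.
Definition alpha (n : nat) : fn := fun i j => if i == 0 then Lam n (-1) j else 0.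
Definition beta (n : nat) : fn := fun i j => if j == 0 then LamD n i (-1) else 0.
Definition Th (n : nat) : fn :=
  if n is m.+2 then conv2 (fun k => fadd (X (alpha k.+1)) (Y (beta k.+1))) m else fzero.

Lemma Lam_rec n i j : Lam n.+1 i j = P (Lam n) i j + Y (rr n) i j.
Proof.
case: n => [|n]; first by rewrite /= conv1_0 P_zero /fzero add0r.
by rewrite /Lam conv1_rec.
Qed.
Lemma LamD_rec n i j : LamD n.+1 i j = P (LamD n) i j + X (ss n) i j.
Proof.
case: n => [|n]; first by rewrite /= conv1_0 P_zero /fzero add0r.
by rewrite /LamD conv1_rec.
Qed.

Lemma Th_rec n i j : Th n.+1 i j = P (Th n) i j + X (alpha n) i j + Y (beta n) i j.
Proof.
case: n => [|[|n]].
- rewrite /= /X /Y /alpha /beta /Lam /LamD /fzero /P !if_same; lra.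
- by rewrite /= conv2_0 P_zero /fadd /fzero add0r addrA.
- by rewrite /Th conv2_rec /fadd addrA.
Qed.

Lemma AX_cC n : AX (cC n).  Proof. exact: AX_Piter AX_chiO. Qed.
Lemma AY_cC n : AY (cC n).  Proof. exact: AY_Piter AY_chiO. Qed.

Lemma AX_rr n : AX (rr n).
Proof. by move=> i j; rewrite /rr AX_cC; case: ifP; rewrite ?oppr0. Qed.
Lemma SY_rr n : SY (rr n).
Proof. by move=> i j; rewrite /rr oppr_eq0. Qed.
Lemma AY_ss n : AY (ss n).
Proof. by move=> i j; rewrite /ss AY_cC; case: ifP; rewrite ?oppr0. Qed.
Lemma SX_ss n : SX (ss n).
Proof. by move=> i j; rewrite /ss oppr_eq0. Qed.

Lemma AX_Lam n : AX (Lam n).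
Proof.
case: n => [|n]; first exact: AX_fzero.
by apply: AX_conv1 => k; apply: AX_Y; apply: AX_rr.
Qed.
Lemma AY_Lam n : AY (Lam n).
Proof.
case: n => [|n]; first exact: AY_fzero.
by apply: AY_conv1 => k; apply: AY_Y; apply: SY_rr.
Qed.
Lemma AX_LamD n : AX (LamD n).
Proof.
case: n => [|n]; first exact: AX_fzero.
by apply: AX_conv1 => k; apply: AX_X; apply: SX_ss.
Qed.
Lemma AY_LamD n : AY (LamD n).
Proof.
case: n => [|n]; first exact: AY_fzero.
by apply: AY_conv1 => k; apply: AY_X; apply: AY_ss.
Qed.

Lemma SX_alpha n : SX (alpha n).
Proof. by move=> i j; rewrite /alpha oppr_eq0. Qed.
Lemma AY_alpha n : AY (alpha n).
Proof. by move=> i j; rewrite /alpha AY_Lam; case: ifP; rewrite ?oppr0. Qed.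
Lemma SY_beta n : SY (beta n).
Proof. by move=> i j; rewrite /beta oppr_eq0. Qed.
Lemma AX_beta n : AX (beta n).
Proof. by move=> i j; rewrite /beta AX_LamD; case: ifP; rewrite ?oppr0. Qed.

Lemma AX_Th n : AX (Th n).
Proof.
case: n => [|[|n]]; try exact: AX_fzero.
apply: AX_conv2 => k; apply: AX_fadd; [apply: AX_X; apply: SX_alpha | apply: AX_Y; apply: AX_beta].
Qed.
Lemma AY_Th n : AY (Th n).
Proof.
case: n => [|[|n]]; try exact: AY_fzero.
apply: AY_conv2 => k; apply: AY_fadd; [apply: AY_X; apply: AY_alpha | apply: AY_Y; apply: SY_beta].
Qed.

Lemma cC0x n j : cC n 0 j = 0. Proof. exact: AX0 (AX_cC n). Qed.
Lemma cC0y n i : cC n i 0 = 0. Proof. exact: AY0 (AY_cC n). Qed.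
Lemma Lam0x n j : Lam n 0 j = 0. Proof. exact: AX0 (AX_Lam n). Qed.
Lemma Lam0y n i : Lam n i 0 = 0. Proof. exact: AY0 (AY_Lam n). Qed.
Lemma LamD0x n j : LamD n 0 j = 0. Proof. exact: AX0 (AX_LamD n). Qed.
Lemma LamD0y n i : LamD n i 0 = 0. Proof. exact: AY0 (AY_LamD n). Qed.
Lemma Th0x n j : Th n 0 j = 0. Proof. exact: AX0 (AX_Th n). Qed.
Lemma Th0y n i : Th n i 0 = 0. Proof. exact: AY0 (AY_Th n). Qed.

Section Main.
Variable F : series.
Hypothesis HF : F_equation F.
Let f n := lcoef (F n).

Definition Reg (n : nat) := forall i j,
 (i <= -1 -> j <= -1 -> f n i j = cC n i j) /\
 (i <= -1 -> 0 <= j -> f n i j = Lam n i (j+1)) /\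
 (0 <= i -> j <= -1 -> f n i j = LamD n (i+1) j) /\
 (0 <= i -> 0 <= j -> f n i j = Th n (i+1) (j+1)).

Lemma Reg0 : Reg 0.
Proof.
move=> i j; rewrite /f (f_0 HF) /cC /= chiOE.
split; [|split; [|split]] => Hi Hj.
- have -> : (i == 1) = false by apply/eqP; lia.
  have -> : (j == 1) = false by apply/eqP; lia.
  rewrite /= ?andbF; case: (_ && _); lra.
- have -> : (j == -1) = false by apply/eqP; lia.
  by rewrite andbF.
- have -> : (i == -1) = false by apply/eqP; lia.
  by [].
- have -> : (i == -1) = false by apply/eqP; lia.
  by [].
Qed.

Lemma RegS n : Reg n -> Reg n.+1.
Proof.
move=> IH i j.
have C := fun a b => proj1 (IH a b).
have L := fun a b => proj1 (proj2 (IH a b)).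
have D := fun a b => proj1 (proj2 (proj2 (IH a b))).
have Q := fun a b => proj2 (proj2 (proj2 (IH a b))).
rewrite /f (f_S HF) -/(f n) /P.
split; [|split; [|split]] => Hi Hj.
-
  rewrite /cC PiterS -/(cC n) /P.
  rewrite (C (i-1) j) ?(C i (j-1)); try lia.
  have -> : (j + 1 == 0) = (j == -1) by apply/eqP/eqP; lia.
  have -> : (i + 1 == 0) = (i == -1) by apply/eqP/eqP; lia.
  case: (boolP (i == -1)) => [/eqP Ei|Ei]; case: (boolP (j == -1)) => [/eqP Ej|Ej].
  + subst i j; rewrite addNr cC0x cC0y. lra.
  + subst i; rewrite (C (-1) (j+1)); try lia.
    rewrite addNr cC0x. lra.
  + subst j; rewrite (C (i+1) (-1)); try lia.
    rewrite addNr cC0y. lra.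
  + rewrite (C (i+1) j) ?(C i (j+1)); try lia. lra.
-
  rewrite Lam_rec /P /Y /rr.
  have -> : j + 1 - 1 = j by lia.
  have -> : (j + 1 + 1 == 0) = false by apply/eqP; lia.
  have -> : (j + 1 == 0) = false by apply/eqP; lia.
  have -> : (i + 1 == 0) = (i == -1) by apply/eqP/eqP; lia.
  rewrite (L (i-1) j) ?(L i (j+1)); try lia.
  case: (boolP (i == -1)) => [/eqP Ei|Ei]; case: (boolP (j == 0)) => [/eqP Ej|Ej].
  + subst i j; rewrite addNr sub0r Lam0x Lam0y ?eqxx (C (-1) (-1)); try lia. lra.
  + subst i; rewrite (L (-1) (j-1)); try lia. rewrite (_ : j - 1 + 1 = j); last by lia. rewrite addNr Lam0x ?eqxx ?(negbTE Ej). lra.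
  + subst j; rewrite sub0r (C i (-1)) ?(L (i+1) 0); try lia. rewrite Lam0y ?eqxx ?(negbTE Ei). lra.
  + rewrite (L i (j-1)) ?(L (i+1) j); try lia. rewrite (_ : j - 1 + 1 = j); last by lia. rewrite ?(negbTE Ej) ?(negbTE Ei). lra.
-
  rewrite LamD_rec /P /X /ss.
  have -> : i + 1 - 1 = i by lia.
  have -> : (i + 1 + 1 == 0) = false by apply/eqP; lia.
  have -> : (i + 1 == 0) = false by apply/eqP; lia.
  have -> : (j + 1 == 0) = (j == -1) by apply/eqP/eqP; lia.
  rewrite (D i (j-1)) ?(D (i+1) j); try lia.
  case: (boolP (j == -1)) => [/eqP Ej|Ej]; case: (boolP (i == 0)) => [/eqP Ei|Ei].
  + subst i j; rewrite addNr sub0r LamD0x LamD0y ?eqxx (C (-1) (-1)); try lia. lra.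
  + subst j; rewrite (D (i-1) (-1)); try lia. rewrite (_ : i - 1 + 1 = i); last by lia. rewrite addNr LamD0y ?eqxx ?(negbTE Ei). lra.
  + subst i; rewrite sub0r (C (-1) j) ?(D 0 (j+1)); try lia. rewrite LamD0x ?eqxx ?(negbTE Ej). lra.
  + rewrite (D (i-1) j) ?(D i (j+1)); try lia. rewrite (_ : i - 1 + 1 = i); last by lia. rewrite ?(negbTE Ej) ?(negbTE Ei). lra.
-
  rewrite Th_rec /P /X /Y /alpha /beta.
  have -> : i + 1 - 1 = i by lia.
  have -> : j + 1 - 1 = j by lia.
  have -> : (i + 1 + 1 == 0) = false by apply/eqP; lia.
  have -> : (j + 1 + 1 == 0) = false by apply/eqP; lia.
  have -> : (i + 1 == 0) = false by apply/eqP; lia.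
  have -> : (j + 1 == 0) = false by apply/eqP; lia.
  rewrite (Q (i+1) j ltac:(lia) ltac:(lia)) (Q i (j+1) ltac:(lia) ltac:(lia)).
  case: (boolP (i == 0)) => [/eqP Ei|Ei]; case: (boolP (j == 0)) => [/eqP Ej|Ej].
  + subst i j; rewrite !sub0r (L (-1) 0 ltac:(lia) ltac:(lia)) (D 0 (-1) ltac:(lia) ltac:(lia)).
    rewrite Th0x Th0y ?eqxx. lra.
  + subst i; rewrite sub0r (L (-1) j ltac:(lia) ltac:(lia)) (Q 0 (j-1) ltac:(lia) ltac:(lia)).
    rewrite (_ : j - 1 + 1 = j); last by lia. rewrite Th0x ?eqxx ?(negbTE Ej). lra.
  + subst j; rewrite sub0r (D i (-1) ltac:(lia) ltac:(lia)) (Q (i-1) 0 ltac:(lia) ltac:(lia)).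
    rewrite (_ : i - 1 + 1 = i); last by lia. rewrite Th0y ?eqxx ?(negbTE Ei). lra.
  + rewrite (Q (i-1) j ltac:(lia) ltac:(lia)) (Q i (j-1) ltac:(lia) ltac:(lia)).
    rewrite (_ : i - 1 + 1 = i); last by lia. rewrite (_ : j - 1 + 1 = j); last by lia. rewrite ?(negbTE Ej) ?(negbTE Ei). lra.
Qed.

Lemma Reg_all n : Reg n.
Proof. elim: n => [|n IH]; [exact: Reg0 | exact: RegS]. Qed.
End Main.

Lemma X_congr f g : f =2 g -> X f =2 X g.
Proof. by move=> H i j; rewrite /X !H. Qed.
Lemma Y_congr f g : f =2 g -> Y f =2 Y g.
Proof. by move=> H i j; rewrite /Y !H. Qed.
Lemma conv1_congr a b n : (forall k, a k =2 b k) -> conv1 a n =2 conv1 b n.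
Proof. move=> H i j; rewrite /conv1; apply: eq_bigr => k _; exact: Piter_congr. Qed.

Lemma lmul_xfilter (A B : lpoly) I J : all (fun a => a.1.1 == 0) A ->
  lcoef (lmul A [seq m <- B | 0 < m.1.1]) I J = if 0 < I then lcoef (lmul A B) I J else 0.
Proof.
rewrite !lcoef_lmul; elim: A => [|a A IH] /=; first by rewrite !big_nil if_same.
move=> /andP[/eqP Ha HA]; rewrite !big_cons IH //.
rewrite (lcoef_filter (fun a _ => 0 < a)) Ha subr0.
by case: ifP => _; rewrite ?mulr0 ?addr0.
Qed.

Lemma lmul_yfilter (A B : lpoly) I J : all (fun a => a.1.2 == 0) A ->
  lcoef (lmul A [seq m <- B | 0 < m.1.2]) I J = if 0 < J then lcoef (lmul A B) I J else 0.
Proof.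
rewrite !lcoef_lmul; elim: A => [|a A IH] /=; first by rewrite !big_nil if_same.
move=> /andP[/eqP Ha HA]; rewrite !big_cons IH //.
rewrite (lcoef_filter (fun _ b => 0 < b)) Ha subr0.
by case: ifP => _; rewrite ?mulr0 ?addr0.
Qed.

Lemma all_sxbar G n : all (fun a => a.1.1 == 0) (sxbar G n).
Proof. by rewrite /sxbar all_map; apply/allP => m _ /=. Qed.
Lemma all_sybar G n : all (fun a => a.1.2 == 0) (sybar G n).
Proof. by rewrite /sybar all_map; apply/allP => m _ /=. Qed.

Lemma lmul_prop A p m : lcoef (lmul A (sdivS (sconst p) m)) =2 Piter m (lcoef (lmul p A)).
Proof.
move=> i j.
rewrite (@lcoef_lmul_congr2 A _ (lmul (lpow S_ m) p)); last first.
  by move=> a b; rewrite lcoef_sdivS_const lcoef_lmulSn.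
rewrite lcoef_lmulC lcoef_lmulA lcoef_lmulSn.
by [].
Qed.

Definition U1 := sdivS (spmul (ladd ly (lscale (-1) lyb)) (sybar (sdivS (sconst O_)))).
Definition U2 := sdivS (spmul (ladd lx (lscale (-1) lxb)) (sxbar (sdivS (sconst O_)))).

Lemma lcoef_U1 k : lcoef (U1 k) =2 Lam k.+1.
Proof.
move=> i j; rewrite /U1 lcoef_sdivS /Lam; apply: conv1_congr => l a b.
rewrite /spmul lcoef_lmulY; apply: Y_congr => c d.
by rewrite lcoef_sybar /rr lcoef_sdivS_const.
Qed.
Lemma lcoef_U2 k : lcoef (U2 k) =2 LamD k.+1.
Proof.
move=> i j; rewrite /U2 lcoef_sdivS /LamD; apply: conv1_congr => l a b.
rewrite /spmul lcoef_lmulX; apply: X_congr => c d.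
by rewrite lcoef_sxbar /ss lcoef_sdivS_const.
Qed.

Lemma T1 k m I J :
  lcoef (lmul (sxbar U1 k) (sxgt (sdivS (sconst (ladd lx (lscale (-1) lxb)))) m)) I J
  = if 0 < I then Piter m (X (alpha k.+1)) I J else 0.
Proof.
rewrite /sxgt lmul_xfilter ?all_sxbar //; case: ifP => // _.
rewrite lmul_prop; apply: Piter_congr => a b.
rewrite lcoef_lmulX; apply: X_congr => c d.
by rewrite lcoef_sxbar lcoef_U1.
Qed.

Lemma T2 k m I J :
  lcoef (lmul (sybar U2 k) (sygt (sdivS (sconst (ladd ly (lscale (-1) lyb)))) m)) I J
  = if 0 < J then Piter m (Y (beta k.+1)) I J else 0.
Proof.
rewrite /sygt lmul_yfilter ?all_sybar //; case: ifP => // _.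
rewrite lmul_prop; apply: Piter_congr => a b.
rewrite lcoef_lmulY; apply: Y_congr => c d.
by rewrite lcoef_sybar lcoef_U2.
Qed.

Lemma lcoef_ladd p q i j : lcoef (ladd p q) i j = lcoef p i j + lcoef q i j.
Proof. exact: lcoef_cat. Qed.

Lemma S1 m I J :
  lcoef (smul (sxbar U1) (sxgt (sdivS (sconst (ladd lx (lscale (-1) lxb))))) m) I J
  = \sum_(k < m.+1) (if 0 < I then Piter (m - k)%N (X (alpha k.+1)) I J else 0).
Proof. rewrite lcoef_smul; apply: eq_bigr => k _; exact: T1. Qed.
Lemma S2 m I J :
  lcoef (smul (sybar U2) (sygt (sdivS (sconst (ladd ly (lscale (-1) lyb))))) m) I J
  = \sum_(k < m.+1) (if 0 < J then Piter (m - k)%N (Y (beta k.+1)) I J else 0).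
Proof. rewrite lcoef_smul; apply: eq_bigr => k _; exact: T2. Qed.

Lemma RHS_coef n i j :
  lcoef (RHS4 n) i j = if (0 <= i) && (0 <= j) then Th n (i+1) (j+1) else 0.
Proof.
rewrite /RHS4 /sadd lcoef_ladd /spmul !lcoef_lmulxbyb.
case: n => [|[|m]].
- by rewrite /smul_t !lcoef_nil addr0 if_same.
- by rewrite /smul_t !lcoef_nil addr0 if_same.
rewrite /smul_t -/U1 -/U2 lcoef_sygt lcoef_sxgt S1 S2.
have -> : (0 < i + 1) = (0 <= i) by apply/idP/idP => H; lia.
have -> : (0 < j + 1) = (0 <= j) by apply/idP/idP => H; lia.
case: (0 <= i); case: (0 <= j) => /=; last by rewrite addr0.
- rewrite /Th /conv2 -big_split /=; apply: eq_bigr => k _.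
  by rewrite Piter_add.
- by rewrite big1 ?add0r.
- by rewrite big1 ?addr0.
Qed.

Theorem mainTheorem4 (F : series) :
  F_equation F -> seqv (F4 F) RHS4.
Proof.
move=> HF n i j; rewrite /scoef /F4 lcoef_sxge lcoef_syge RHS_coef.
case Hi: (0 <= i); case Hj: (0 <= j) => //=.
exact: (proj2 (proj2 (proj2 (Reg_all HF n i j))) Hi Hj).
Qed.
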